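(* Let $(\Omega,\mathcal{F},\mathbb{P})$ be a nonatomic probability space and $(\Phi,\Psi)$ an Orlicz pair as in the context. For every $X\in L^\Phi$ there exists a sequence $(\pi_n)\subset\Pi$ such that $\mathbb{E}[X|\pi_n]$ order converges to $X$ in $L^\Phi$; that is, $\mathbb{E}[X|\pi_n]\to X$ a.s. and there is $Z\in L^\Phi$ with $|\mathbb{E}[X|\pi_n]|\le Z$ for all $n$.
   Context: $(\Omega,\mathcal{F},\mathbb{P})$ is a nonatomic probability space. An Orlicz function is a convex, increasing $\Phi:[0,\infty)\to[0,\infty)$ with $\Phi(0)=0$; its conjugate is $\Psi(s)=\sup_{t\ge0}(ts-\Phi(t))$. Standing assumption: $\Phi(t)>0$ for $t>0$ and $\lim_{t\to\infty}\Phi(t)/t=\infty$. $L^\Phi$ is the space of random variables $X$ (mod a.s. equality) with $\|X\|_\Phi:=\inf\{\lambda>0:\mathbb{E}[\Phi(|X|/\lambda)]\le 1\}<\infty$. $\Pi$ denotes the set of all finite measurable partitions of $\Omega$ whose members all have nonzero probability; $\mathbb{E}[X|\pi]:=\mathbb{E}[X|\sigma(\pi)]$. For sequences in $L^\Phi$, order convergence $X_n\to X$ is equivalent to a.s. convergence together with domination $|X_n|\le Z$ for some $Z\in L^\Phi$. *)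

(* Defs.v *)
From HB Require Import structures.
From mathcomp Require Import all_boot all_order all_algebra.
From mathcomp Require Import all_classical all_reals all_analysis.
Set Implicit Arguments. Unset Strict Implicit. Unset Printing Implicit Defensive.
Import Order.TTheory GRing.Theory Num.Theory.
Import numFieldNormedType.Exports.
Local Open Scope classical_set_scope.
Local Open Scope ring_scope.

Section Defs.
Context {d : measure_display} {T : measurableType d} {R : realType}.

Definition nonatomic (P : probability T R) : Prop :=
  forall A : set T, measurable A -> (0 < P A)%E ->
    exists B : set T, [/\ measurable B, B `<=` A, (0 < P B)%E & (P B < P A)%E].

(* Orlicz function (only its values on [0,oo) matter), together with the
   standing assumptions Phi(t)>0 for t>0 and Phi(t)/t -> oo. *)
Definition orlicz_function (Phi : R -> R) : Prop :=
  [/\ Phi 0 = 0,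
      (forall s t (l : R), 0 <= s -> 0 <= t -> 0 <= l <= 1 ->
         Phi (l * s + (1 - l) * t) <= l * Phi s + (1 - l) * Phi t),
      (forall s t, 0 <= s -> s <= t -> Phi s <= Phi t),
      (forall t, 0 < t -> 0 < Phi t) &
      (forall M : R, exists t0 : R, forall t, t0 <= t -> 0 < t -> M <= Phi t / t)].

(* X belongs to L^Phi: X is measurable and ||X||_Phi < oo, i.e. the set
   {lambda > 0 | E[Phi(|X|/lambda)] <= 1} is nonempty. *)
Definition in_LPhi (P : probability T R) (Phi : R -> R) (X : T -> R) : Prop :=
  measurable_fun setT X /\
  exists lam : R, 0 < lam /\
    (\int[P]_x (Phi (`|X x| / lam))%:E <= 1)%E.

Record fin_family := FinFamily { ff_card : nat; ff_block : 'I_ff_card -> set T }.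

Definition in_Pi (P : probability T R) (q : fin_family) : Prop :=
  [/\ (forall i, measurable (@ff_block q i)),
      (forall i, (0 < P (@ff_block q i))%E),
      (forall i j, i != j -> @ff_block q i `&` @ff_block q j = set0) &
      (forall x : T, exists i, @ff_block q i x)].

Definition cond_exp_part (P : probability T R) (q : fin_family) (X : T -> R)
  : T -> R :=
  fun x => \sum_(i < ff_card q)
     (Rintegral P (@ff_block q i) X / fine (P (@ff_block q i)))
       * \1_(@ff_block q i) x.

End Defs.

(* Main.v *)
Require Import Defs.
Set Warnings "-notation-overridden,-ambiguous-paths,-notation-incompatible-prefix".
Set Implicit Arguments. Unset Strict Implicit. Unset Printing Implicit Defensive.
From HB Require Import structures.
From mathcomp Require Import all_boot all_order all_algebra.
From mathcomp Require Import all_classical all_reals all_analysis.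
From mathcomp Require Import ring lra.
From mathcomp Require Import measurable_realfun.
Import Order.TTheory GRing.Theory Num.Theory.
Import numFieldNormedType.Exports.
Local Open Scope classical_set_scope.
Local Open Scope ring_scope.
From mathcomp Require Import zify.
Section Aux.
Context d (T : measurableType d) (R : realType) (P : probability T R).

Lemma Pfin A : measurable A -> P A \is a fin_num.
Proof.
move=> mA; rewrite ge0_fin_numE //.
exact: (le_lt_trans (probability_le1 P mA)) (ltey _).
Qed.

Lemma fineP_gt0 A : measurable A -> (0 < P A)%E -> 0 < fine (P A).
Proof.
move=> mA PA; apply: fine_gt0; rewrite PA /=.
by rewrite -ge0_fin_numE ?Pfin // ltW.
Qed.

Lemma intB (X : T -> R) (B : set T) (a : R) : measurable B ->
  P.-integrable setT (EFin \o X) ->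
  P.-integrable B (EFin \o (fun y => X y - a)).
Proof.
move=> mB iX.
have iXB : P.-integrable B (EFin \o X) := integrableS measurableT mB (subsetT B) iX.
have iC : P.-integrable B (EFin \o cst a) := finite_measure_integrable_cst P a mB.
by apply: eq_integrable (integrableB mB iXB iC) => // y _ /=; rewrite ?EFinB.
Qed.

Lemma avg_close (X : T -> R) (B : set T) (a r : R) : measurable B ->
  (0 < P B)%E -> P.-integrable setT (EFin \o X) ->
  (\int[P]_(y in B) (`|X y - a|)%:E <= (r * fine (P B))%:E)%E ->
  `|Rintegral P B X / fine (P B) - a| <= r.
Proof.
move=> mB PB iX H.
have iXB : P.-integrable B (EFin \o X) := integrableS measurableT mB (subsetT B) iX.
have iC : P.-integrable B (EFin \o cst a) := finite_measure_integrable_cst P a mB.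
have p0 := fineP_gt0 mB PB.
set p := fine (P B) in p0 H *.
have -> : Rintegral P B X / p - a = Rintegral P B (fun y => X y - a) / p.
  rewrite RintegralB // Rintegral_cst // -/p mulrBl mulfK //; exact: lt0r_neq0.
rewrite normrM normfV (gtr0_norm p0) ler_pdivrMr //.
apply: le_trans (le_normr_Rintegral mB (intB a mB iX)) _.
have iN := integrable_norm (intB a mB iX).
rewrite -lee_fin /Rintegral fineK //.
exact: (integrable_fin_num mB iN).
Qed.

Lemma cond_exp_block (q : fin_family) (X : T -> R) x (j : 'I_(ff_card q)) :
  (forall i, i != j -> ~ ff_block i x) -> ff_block j x ->
  cond_exp_part P q X x = Rintegral P (ff_block j) X / fine (P (ff_block j)).
Proof.
move=> Hi Hj; rewrite /cond_exp_part (bigD1 j) //= big1 ?addr0.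
  by rewrite indicE mem_set // mulr1.
move=> i ij; rewrite indicE memNset ?mulr0 //; exact: Hi.
Qed.

End Aux.
Section Orl.
Context d (T : measurableType d) (R : realType) (P : probability T R).
Variable Phi : R -> R.
Hypothesis oPhi : orlicz_function Phi.

Lemma phi_ge0 t : 0 <= t -> 0 <= Phi t.
Proof. by case: oPhi => P0 _ Pm _ _ t0; rewrite -P0; apply: Pm. Qed.

Lemma phi_meas (g : T -> R) : measurable_fun setT g -> (forall x, 0 <= g x) ->
  measurable_fun setT (fun x => Phi (g x)).
Proof.
move=> mg g0.
have mP : measurable_fun setT (fun t : R => Phi (Num.max t 0)).
  apply: nondecreasing_measurable => // s t st.
  case: oPhi => _ _ Pm _ _; apply: Pm; first by rewrite le_max lexx orbT.
  by rewrite ge_max !le_max st lexx /= orbT.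
have -> : (fun x => Phi (g x)) = (fun t : R => Phi (Num.max t 0)) \o g.
  by apply: funext => x /=; rewrite max_l.
exact: measurableT_comp.
Qed.

Lemma int_affine (h : T -> R) (a b : R) : 0 <= a -> 0 <= b ->
  measurable_fun setT h -> (forall x, 0 <= h x) ->
  (\int[P]_x (a + b * h x)%:E = a%:E + b%:E * \int[P]_x (h x)%:E)%E.
Proof.
move=> a0 b0 mh h0.
under eq_integral do rewrite EFinD.
rewrite ge0_integralD //; last first.
- by apply/measurable_EFinP; apply: measurable_funM => //; exact: measurable_cst.
- by move=> x _; rewrite lee_fin mulr_ge0.
rewrite (integral_cst P measurableT a%:E).
under eq_integral do rewrite EFinM.
rewrite ge0_integralZl_EFin //.
- congr (_ + _)%E; rewrite -[RHS]mule1; congr (_ * _)%E; exact: probability_setT.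
- by move=> x _; rewrite lee_fin.
- exact/measurable_EFinP.
Qed.

Lemma LPhi_int (X : T -> R) : in_LPhi P Phi X -> P.-integrable setT (EFin \o X).
Proof.
case=> mX [lam [lam0 HI]].
have [t0 Ht0] : exists t0 : R, forall t, 0 <= t -> t <= t0 + Phi t.
  case: oPhi => _ _ _ _ /(_ 1) [t0 H]; exists `|t0| => t t0'.
  have [t0t|tt0] := leP t0 t.
    have [tz|tp] := eqVneq t 0.
      by rewrite tz addr_ge0 // phi_ge0.
    have tp' : 0 < t by rewrite lt0r tp t0'.
    have := H t t0t tp'; rewrite ler_pdivlMr // mul1r => h.
    by apply: le_trans h _; rewrite lerDr.
  apply: (le_trans (ltW tt0)); apply: le_trans (ler_norm _) _.
  by rewrite lerDl phi_ge0.
have t00 : 0 <= t0 by have := Ht0 0 (lexx _); rewrite (_ : Phi 0 = 0) ?addr0 //; case: oPhi.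
have mF : measurable_fun setT (fun x => Phi (`|X x| / lam)).
  apply: phi_meas; last by move=> x; rewrite divr_ge0 // ltW.
  by apply: measurable_funM => //; apply: measurableT_comp.
apply/integrableP; split; first exact/measurable_EFinP.
apply: (@le_lt_trans _ _ (\int[P]_x (lam * t0 + lam * Phi (`|X x| / lam))%:E)%E).
  apply: ge0_le_integral => //.
  - by apply: measurableT_comp => //; exact/measurable_EFinP.
  - apply/measurable_EFinP; apply: measurable_funD; first exact: measurable_cst.
    by apply: measurable_funM => //; exact: measurable_cst.
  - move=> x _ /=; rewrite lee_fin -mulrDr.
    have h := Ht0 (`|X x| / lam) (divr_ge0 (normr_ge0 _) (ltW lam0)).
    rewrite {1}(_ : `|X x| = lam * (`|X x| / lam)); last by rewrite mulrC divfK // gt_eqF.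
    by rewrite ler_wpM2l // ltW.
rewrite (int_affine (h:=fun x => Phi (`|X x| / lam)) (mulr_ge0 (ltW lam0) t00) (ltW lam0) mF); last first.
  by move=> x; rewrite phi_ge0 // divr_ge0 // ltW.
apply: (@le_lt_trans _ _ (lam * t0 + lam)%:E); last exact: ltey.
rewrite EFinD leeD2l // -[in leRHS](mule1 lam%:E); apply: lee_wpmul2l => //.
by rewrite lee_fin ltW.
Qed.

Lemma LPhi_Z (X : T -> R) (c : R) : in_LPhi P Phi X -> 0 <= c ->
  in_LPhi P Phi (fun x => `|X x| + c).
Proof.
case=> mX [lam0 [l0 HI]] c0.
case: oPhi => P0 Pconv Pm Ppos _.
have P10 : 0 < Phi 1 := Ppos 1 ltr01.
set t1 := (1 + Phi 1)^-1.
have t10 : 0 < t1 by rewrite invr_gt0 addr_gt0.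
have t11 : t1 <= 1 by rewrite invf_le1 ?addr_gt0 // lerDl ltW.
have Pt1 : Phi t1 <= 1.
  have := Pconv 1 0 t1 ler01 (lexx 0); rewrite t11 ltW //= => /(_ isT).
  rewrite mulr1 mulr0 addr0 P0 mulr0 addr0 => h; apply: le_trans h _.
  by rewrite mulrC ler_pdivrMr ?addr_gt0 // mul1r lerDr.
set lam := 2 * lam0 + 2 * c / t1.
have lam0' : 0 < lam.
  have h2 : 0 < 2 * lam0 by rewrite mulr_gt0.
  by apply: lt_le_trans h2 _; rewrite lerDl divr_ge0 ?mulr_ge0 // ltW.
have mXn : measurable_fun setT (fun x => `|X x|) by apply: measurableT_comp.
split.
  by apply: measurable_funD => //; exact: measurable_cst.
exists lam; split => //.
have mF0 : measurable_fun setT (fun x => Phi (`|X x| / lam0)).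
  apply: phi_meas; last by move=> x; rewrite divr_ge0 // ltW.
  by apply: measurable_funM => //; exact: measurable_cst.
apply: (@le_trans _ _ (\int[P]_x (2^-1 + 2^-1 * Phi (`|X x| / lam0))%:E)%E).
  apply: ge0_le_integral => //.
  - by move=> x _; rewrite lee_fin phi_ge0 // divr_ge0 // ltW.
  - apply/measurable_EFinP; apply: phi_meas; last by move=> x; rewrite divr_ge0 // ltW.
    apply: measurable_funM => //.
    apply: measurableT_comp => //.
    by apply: measurable_funD => //; exact: measurable_cst.
  - apply/measurable_EFinP; apply: measurable_funD; first exact: measurable_cst.
    by apply: measurable_funM => //; exact: measurable_cst.
  move=> x _; rewrite lee_fin ger0_norm ?addr_ge0 //.
  set u := 2 * `|X x| / lam; set v := 2 * c / lam.
  have u0 : 0 <= u by rewrite divr_ge0 ?mulr_ge0 // ltW.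
  have v0 : 0 <= v by rewrite divr_ge0 ?mulr_ge0 // ltW.
  have -> : (`|X x| + c) / lam = 2^-1 * u + (1 - 2^-1) * v.
    rewrite /u /v; field; exact: lt0r_neq0.
  have h12 : 0 <= (2^-1 : R) <= 1 by rewrite invr_ge0 ler0n invf_le1 ?ler1n.
  apply: le_trans (Pconv u v _ u0 v0 h12) _.
  have -> : 1 - 2^-1 = 2^-1 :> R by field.
  rewrite [leRHS]addrC; apply: lerD.
        apply: ler_wpM2l; first by rewrite invr_ge0.
    apply: Pm u0 _; rewrite /u ler_pdivrMr // /lam mulrDr.
    rewrite (_ : `|X x| / lam0 * (2 * lam0) = 2 * `|X x|); last by field; exact: lt0r_neq0.
    by rewrite lerDl mulr_ge0 ?divr_ge0 ?mulr_ge0 // ltW.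
  rewrite -[leRHS]mulr1; apply: ler_wpM2l; first by rewrite invr_ge0.
  apply: le_trans (Pm _ _ v0 _) Pt1.
  rewrite /v ler_pdivrMr //.
  rewrite /lam mulrDr (_ : t1 * (2 * c / t1) = 2 * c); last by field; exact: lt0r_neq0.
  by rewrite lerDr; apply: mulr_ge0; [exact: ltW| apply: mulr_ge0 => //; exact: ltW].
rewrite int_affine ?invr_ge0 //; last by move=> x; rewrite phi_ge0 // divr_ge0 // ltW.
apply: (@le_trans _ _ (2^-1 + 2^-1 * 1)%:E).
  by rewrite EFinD leeD2l // EFinM; apply: lee_wpmul2l => //; rewrite lee_fin invr_ge0.
by rewrite lee_fin mulr1; lra.
Qed.

End Orl.
Section Tail.
Context d (T : measurableType d) (R : realType) (P : probability T R) (X : T -> R).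
Hypothesis mX : measurable_fun setT X.
Hypothesis iX : P.-integrable setT (EFin \o X).

Lemma mset_le (c : R) : measurable [set y | c <= `|X y|].
Proof.
have := (measurableT_comp (@normr_measurable R setT) mX) measurableT _ (measurable_itv `[c, +oo[).
by rewrite setTI; congr measurable; apply/seteqP; split => y /=; rewrite in_itv /= andbT.
Qed.

Lemma tail_small (eps : R) : 0 < eps -> exists m0 : nat, forall m : nat, (m0 <= m)%N ->
  (\int[P]_(y in [set y | (m%:R <= `|X y|)%R]) (`|X y|)%:E <= eps%:E)%E.
Proof.
move=> e0.
pose f (m : nat) := (fun y => (`|X y|)%:E) \_ [set y | m%:R <= `|X y|].
have mN : measurable_fun setT (fun y => (`|X y|)%:E).
  by apply/measurable_EFinP; exact: measurableT_comp.
have mf : forall m, measurable_fun setT (f m).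
  move=> m; apply/(measurable_restrictT _ _).1; first exact: mset_le.
  exact: measurable_funS mN.
have ff : {ae P, forall x, setT x -> f ^~ x @ \oo --> cst 0%E x}.
  apply: aeW => x _; apply: cvg_near_cst.
  have := nbhs_infty_gtr (`|X x|); apply: filterS => m hm.
  rewrite /f /patch memNset //= => hle.
  by move: (lt_le_trans hm hle); rewrite ltxx.
have fg : {ae P, forall x n, setT x -> (`|f n x| <= `|X x|%:E)%E}.
  apply: aeW => x n _; rewrite /f /patch; case: ifP => _ /=.
    by rewrite normr_id.
  by rewrite normr0 lee_fin.
have [_ _ H] := @dominated_convergence _ T R P setT measurableT f (cst 0%E)
  (fun y => (`|X y|)%:E) mf (measurable_cst _) ff (integrable_norm iX) fg.
rewrite integral0 in H.
move/fine_cvgP: H => [Hfin /cvgrPdist_le /(_ eps e0) Hc].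
have : \forall m \near \oo, (\int[P]_x f m x <= eps%:E)%E.
  apply: filterS2 Hfin Hc => m /= hf hc.
  rewrite -(fineK hf) lee_fin; move: hc; rewrite sub0r normrN.
  exact: le_trans (ler_norm _).
case => N _ HN; exists N => m Nm; rewrite integral_mkcond; exact: HN.
Qed.
End Tail.
Section Constr.
Context d (T : measurableType d) (R : realType) (P : probability T R) (X : T -> R).
Hypothesis mX : measurable_fun setT X.

Definition w (n : nat) : R := 2%:R ^+ n.
Lemma w_gt0 n : 0 < w n. Proof. by rewrite /w exprn_gt0. Qed.
Lemma w_ge1 n : 1 <= w n. Proof. by rewrite /w exprn_ege1 // ler1n. Qed.
Definition fl n x : int := Num.floor (X x * w n).
Definition L n k : set T := [set x | fl n x = k].

Lemma mL n k : measurable (L n k).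
Proof.
have mf : measurable_fun setT (fun x => X x * w n).
  by apply: measurable_funM => //; exact: measurable_cst.
rewrite (_ : L n k = setT `&` (fun x => X x * w n) @^-1` `[k%:~R, (k + 1)%:~R[).
  exact: mf measurableT _ (measurable_itv _).
rewrite setTI; apply/seteqP; split => y /=; rewrite in_itv /=.
  by rewrite /L /fl /= => <-; exact: floor_itv.
by move=> h; rewrite /L /fl /=; apply/eqP; rewrite floor_eq.
Qed.

Lemma L_close n x y : fl n x = fl n y -> `|X y - X x| <= (w n)^-1.
Proof.
move=> h; have w0 := w_gt0 n.
have /andP[a1 a2] := floor_itv (X x * w n).
have /andP[b1 b2] := floor_itv (X y * w n).
rewrite -/(fl n x) -/(fl n y) h intrD in a1 a2 b1 b2.
have : `|X y * w n - X x * w n| <= 1.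
  rewrite ler_norml; apply/andP; split; lra.
rewrite -mulrBl normrM (gtr0_norm w0) => H.
by rewrite -[leRHS]mul1r ler_pdivlMr.
Qed.

Definition rng (N : nat) : seq int := [seq (i%:Z - N%:Z)%R | i <- iota 0 (2 * N)].

Lemma rng_uniq N : uniq (rng N).
Proof.
rewrite map_inj_uniq ?iota_uniq // => a b /addIr h.
by move: h => [].
Qed.

Lemma fl_rng n (M : nat) y : `|X y| < M%:R -> fl n y \in rng (M * 2 ^ n).
Proof.
move=> hy; set N := (M * 2 ^ n)%N.
have w0 := w_gt0 n.
have hN : (N%:R : R) = M%:R * w n by rewrite /N natrM natrX.
have h1 : (- N%:Z <= fl n y)%R.
  rewrite /fl floor_ge_int intrN -[(N%:Z)%:~R]/(N%:R) hN -mulNr ler_pM2r //.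
  by move: hy; rewrite ltr_norml => /andP[/ltW].
have h2 : (fl n y < N%:Z)%R.
  rewrite /fl floor_lt_int -[(N%:Z)%:~R]/(N%:R) hN ltr_pM2r //.
  by move: hy; rewrite ltr_norml => /andP[_].
apply/mapP; exists (absz (fl n y + N%:Z)%R).
  by rewrite mem_iota /=; lia.
lia.
Qed.

Lemma mfl_in n (s : seq int) : measurable [set y | fl n y \in s].
Proof.
elim: s => [|k s IH].
  by rewrite (_ : [set y | _] = set0) //; apply/seteqP; split => y //=; rewrite in_nil.
rewrite (_ : [set y | _] = L n k `|` [set y | fl n y \in s]); first exact: measurableU (mL _ _) IH.
apply/seteqP; split => y /=; rewrite in_cons.
  by case/orP => [/eqP h|h]; [left|right].
by case => [->|->]; rewrite ?eqxx ?orbT.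
Qed.

Variables (k0 : int) (M n : nat).

Definition sq : seq int :=
  [seq k <- rng (M * 2 ^ n) | (0 < P (L n k))%E && (k != k0)].

Lemma sq_uniq : uniq sq.
Proof. exact/filter_uniq/rng_uniq. Qed.

Lemma mem_sq k : (k \in sq) = [&& (0 < P (L n k))%E, k != k0 & k \in rng (M * 2 ^ n)].
Proof. by rewrite mem_filter andbA. Qed.

Definition Bst : set T := [set y | fl n y \notin sq].

Lemma mBst : measurable Bst.
Proof.
rewrite (_ : Bst = ~` [set y | fl n y \in sq]); first exact/measurableC/mfl_in.
by apply/seteqP; split => y /=; [move/negP|move/negP].
Qed.

Definition blk (i : nat) : set T :=
  if (i < size sq)%N then L n (nth 0 sq i) else Bst.

Definition qq : fin_family := @FinFamily d T (size sq).+1 (fun i => blk i).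

Lemma blk_disj (i j : nat) y : (i <= size sq)%N -> (j <= size sq)%N ->
  blk i y -> blk j y -> i = j.
Proof.
rewrite /blk => hi hj; case: ifP => hi'; case: ifP => hj'.
- rewrite /L /= => h1 h2; apply/eqP; rewrite -(nth_uniq 0 hi' hj' sq_uniq) -h1 -h2 //.
- by rewrite /L /Bst /= => h1; rewrite h1 mem_nth.
- by rewrite /L /Bst /= => + h1; rewrite h1 mem_nth.
- move=> _ _; apply/eqP; rewrite eqn_leq; lia.
Qed.

Lemma blk_cover y : exists j, (j <= size sq)%N /\ blk j y.
Proof.
case h: (fl n y \in sq).
  exists (index (fl n y) sq); rewrite /blk index_mem h; split.
    by apply: ltnW; rewrite index_mem.
  by rewrite /L /= nth_index.
exists (size sq); rewrite /blk ltnn; split => //.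
by rewrite /Bst /= h.
Qed.

Lemma qq_Pi : (0 < P Bst)%E -> in_Pi P qq.
Proof.
move=> PB; split => /=.
- by move=> i; rewrite /blk; case: ifP => _; [exact: mL|exact: mBst].
- move=> i; rewrite /blk; case: ifP => // h.
  by have := mem_nth 0 h; rewrite mem_sq => /and3P[].
- move=> i j ij; apply/seteqP; split => y // [hi hj].
  move/eqP: ij; apply; apply: val_inj.
  by apply: (blk_disj _ _ hi hj); rewrite -ltnS.
- move=> y; have [j [hj hy]] := blk_cover y.
  by exists (Ordinal (hj : (j < (size sq).+1)%N)).
Qed.

Lemma qq_cond_in x : fl n x \in sq ->
  cond_exp_part P qq X x = Rintegral P (L n (fl n x)) X / fine (P (L n (fl n x))).
Proof.
move=> h.
have hj : (index (fl n x) sq < (size sq).+1)%N by rewrite ltnS ltnW // index_mem.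
have bj : blk (index (fl n x) sq) = L n (fl n x) by rewrite /blk index_mem h nth_index.
rewrite (@cond_exp_block _ _ _ P qq X x (Ordinal hj)) /= ?bj //.
  move=> i ij hi; move/eqP: ij; apply; apply: val_inj => /=.
  apply: (blk_disj (j := index (fl n x) sq) _ _ hi).
  - by rewrite -ltnS.
  - by rewrite ltnW // index_mem.
  - by rewrite bj.
Qed.

Lemma qq_cond_out x : fl n x \notin sq ->
  cond_exp_part P qq X x = Rintegral P Bst X / fine (P Bst).
Proof.
move=> h.
have hj : (size sq < (size sq).+1)%N by [].
have bj : blk (size sq) = Bst by rewrite /blk ltnn.
rewrite (@cond_exp_block _ _ _ P qq X x (Ordinal hj)) /= ?bj //.
  move=> i ij hi; move/eqP: ij; apply; apply: val_inj => /=.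
  apply: (blk_disj (j := size sq) _ _ hi).
  - by rewrite -ltnS.
  - by [].
  - by rewrite bj.
Qed.

End Constr.
Section Step.
Context d (T : measurableType d) (R : realType) (P : probability T R) (X : T -> R).
Hypothesis mX : measurable_fun setT X.
Hypothesis iX : P.-integrable setT (EFin \o X).
Variables (n M : nat) (x0 : T) (N1 : set T).
Hypothesis mN1 : measurable N1.
Hypothesis PN1 : P N1 = 0%E.
Hypothesis HN1 : forall y, ~ N1 y -> (0 < P (L X n (fl X n y)))%E.
Hypothesis x0N1 : ~ N1 x0.
Hypothesis M1 : (1 <= M)%N.
Hypothesis Mtail : (\int[P]_(y in [set y | (M%:R <= `|X y|)%R]) (`|X y|)%:E
   <= ((w R n)^-1 * fine (P (L X n (fl X n x0))))%:E)%E.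

Let k0 := fl X n x0.
Let s := sq P X k0 M n.
Let C := L X n k0.
Let B := Bst P X k0 M n.
Let e := (w R n)^-1.
Let a0 := X x0.

Lemma C_sub_B : C `<=` B.
Proof. by move=> y; rewrite /C /B /Bst /L /= => ->; rewrite mem_sq eqxx andbF. Qed.

Lemma PC_gt0 : (0 < P C)%E.
Proof. exact: HN1. Qed.

Lemma PB_gt0 : (0 < P B)%E.
Proof.
apply: (lt_le_trans PC_gt0); apply: le_measure; rewrite ?inE; 
  [exact: mL|exact: mBst|exact: C_sub_B].
Qed.

Lemma e_ge0 : 0 <= e. Proof. by rewrite invr_ge0 ltW // w_gt0. Qed.
Lemma e_le1 : e <= 1. Proof. by rewrite invf_le1 ?w_gt0 ?w_ge1. Qed.

Lemma outside_big y : B y -> ~ C y -> ~ N1 y -> (M%:R <= `|X y|)%R.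
Proof.
move=> By nCy nNy; rewrite leNgt; apply/negP => hy.
have hr := @fl_rng _ _ _ X n M y hy.
move: By; rewrite /B /Bst /= mem_sq HN1 //= hr andbT.
by case: eqP => // h; exfalso; apply: nCy.
Qed.

Lemma Bst_bound : `|Rintegral P B X / fine (P B) - a0| <= (2 + `|a0|) * e.
Proof.
have mB := @mBst _ _ _ P X mX k0 M n.
have mC : measurable C := @mL _ _ _ X mX n k0.
have mT1 : measurable [set y | (M%:R <= `|X y|)%R] := @mset_le _ _ _ X mX _.
have mA : measurable_fun setT (fun y => (`|X y - a0|)%:E).
  apply/measurable_EFinP; apply: measurableT_comp => //.
  by apply: measurable_funB => //; exact: measurable_cst.
have mAS : forall D, measurable_fun D (fun y => (`|X y - a0|)%:E).
  by move=> D; exact: (measurable_funS measurableT (subsetT D) mA).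
have mS : forall D (f : T -> \bar R), measurable_fun setT f -> measurable_fun D f.
  by move=> D f mf; exact: (measurable_funS measurableT (subsetT D) mf).
have A0 : forall y, (0 <= (`|X y - a0|)%:E)%E by move=> y; rewrite lee_fin.
apply: avg_close => //; [exact: PB_gt0|].
set c := fine (P C).
have cPC : P C = c%:E by rewrite fineK // Pfin.
have cB : c <= fine (P B).
  rewrite /c fine_le ?Pfin //; apply: le_measure; rewrite ?inE //; exact: C_sub_B.
have c0 : 0 <= c by rewrite /c fine_ge0.
rewrite -{1}(setDUK C_sub_B) ge0_integral_setU //.
2: exact: measurableD.
2: by rewrite disj_set2E; apply/eqP/seteqP; split => y // [? []].
have h1 : (\int[P]_(y in C) (`|X y - a0|)%:E <= (e * c)%:E)%E.
  apply: (@le_trans _ _ (\int[P]_(y in C) e%:E)%E).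
    apply: ge0_le_integral => //.
    by move=> y Cy; rewrite lee_fin; apply: L_close; rewrite Cy.
  rewrite integral_cst // EFinM; apply: lee_wpmul2l; first by rewrite lee_fin e_ge0.
  by rewrite /c fineK // Pfin.
have h2 : (\int[P]_(y in B `\` C) (`|X y - a0|)%:E <= ((1 + `|a0|) * (e * c))%:E)%E.
  rewrite (ge0_negligible_integral _ _ _ _ PN1) //; last exact: measurableD.
  apply: (@le_trans _ _ (\int[P]_(y in [set y | (M%:R <= `|X y|)%R]) (`|X y - a0|)%:E)%E).
    apply: ge0_subset_integral => //.
      by apply: measurableD => //; exact: measurableD.
    by move=> y [[By nCy] nNy]; exact: outside_big.
  apply: (@le_trans _ _ (\int[P]_(y in [set y | (M%:R <= `|X y|)%R]) (`|X y| + `|a0|)%:E)%E).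
    apply: ge0_le_integral => //;
      try (by move=> y _; rewrite lee_fin addr_ge0);
      try (by apply: mS; apply/measurable_EFinP; apply: measurable_funD; [exact: measurableT_comp| exact: measurable_cst]);
      try (by move=> y _; rewrite lee_fin ler_normB).
  under eq_integral do rewrite EFinD.
  rewrite ge0_integralD //;
    try (by apply: mS; apply/measurable_EFinP; exact: measurableT_comp);
    try (by move=> y _; rewrite lee_fin);
    try exact: measurable_cst.
  rewrite integral_cst //.
  have Mt0 := Mtail.
  set I := (\int[P]_(y in _) _)%E in Mt0 *.
  have I0 : (0 <= I)%E by apply: integral_ge0 => y _; rewrite lee_fin.
  have PT1 : (P [set y | (M%:R <= `|X y|)%R] <= I)%E.
    rewrite -[leLHS]mul1e -integral_cst //; apply: ge0_le_integral => //;
      try exact: measurable_cst;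
      try (by apply: mS; apply/measurable_EFinP; exact: measurableT_comp);
      try (by move=> y /= hy; rewrite lee_fin; apply: le_trans hy; rewrite ler1n).
  have Ifin : I \is a fin_num by rewrite ge0_fin_numE // (le_lt_trans Mt0) // ltey.
  rewrite -(fineK Ifin) in Mt0 PT1 *.
  apply: le_trans; first by apply: leeD2l; apply: lee_wpmul2l; [rewrite lee_fin|exact: PT1].
  rewrite -EFinM -EFinD lee_fin.
  move: Mt0; rewrite lee_fin -/e -/C -/c => Mt.
  have a00 : 0 <= `|a0| by [].
  have h := ler_wpM2l a00 Mt.
  lra.
have e0 := e_ge0.
apply: le_trans (leeD h1 h2) _; rewrite -EFinD lee_fin.
have a00 : 0 <= `|a0| by [].
have h : 0 <= (2 + `|a0|) * e by rewrite mulr_ge0 // addr_ge0.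
have := ler_wpM2l h cB.
lra.
Qed.

Let q := qq P X k0 M n.

Lemma level_bound x : fl X n x \in s -> `|cond_exp_part P q X x - X x| <= e.
Proof.
move=> h; rewrite /q qq_cond_in //.
have mLx := @mL _ _ _ X mX n (fl X n x).
have PL : (0 < P (L X n (fl X n x)))%E by move: h; rewrite mem_sq => /and3P[].
apply: avg_close => //.
apply: (@le_trans _ _ (\int[P]_(y in L X n (fl X n x)) e%:E)%E).
  apply: ge0_le_integral => //;
    try (by move=> y /= hy; rewrite lee_fin; apply: L_close; rewrite hy);
    try (by move=> y _; rewrite lee_fin);
    try (apply: (measurable_funS measurableT (subsetT _));
    apply/measurable_EFinP; apply: measurableT_comp => //;
    by apply: measurable_funB => //; exact: measurable_cst).
rewrite integral_cst // EFinM; apply: lee_wpmul2l; first by rewrite lee_fin e_ge0.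
by rewrite fineK // Pfin.
Qed.

Lemma step :
  [/\ in_Pi P q,
      (forall x, `|cond_exp_part P q X x| <= `|X x| + (2 * `|a0| + 3)) &
      (forall x, ~ N1 x -> `|X x| < M%:R ->
         `|cond_exp_part P q X x - X x| <= (3 + `|a0|) * e)].
Proof.
have e0 := e_ge0; have e1 := e_le1.
have a00 : 0 <= `|a0| by [].
have hB : forall x, fl X n x \notin s -> `|cond_exp_part P q X x - a0| <= (2 + `|a0|) * e.
  by move=> x h; rewrite /q qq_cond_out //; exact: Bst_bound.
split.
- by apply: qq_Pi => //; exact: PB_gt0.
- move=> x; set v := cond_exp_part P q X x.
  case h: (fl X n x \in s).
    have hv := level_bound h; rewrite -/v in hv.
    have := ler_normD (v - X x) (X x); rewrite subrK => hn.
    have := normr_ge0 (X x).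
    lra.
  have hv := hB x (negbT h); rewrite -/v in hv.
  have := ler_normD (v - a0) a0; rewrite subrK => hn.
  have h2a : 0 <= 2 + `|a0| by lra.
  have := ler_wpM2l h2a e1.
  have := normr_ge0 (X x).
  lra.
- move=> x nNx hx; set v := cond_exp_part P q X x.
  have h3 : 1 <= 3 + `|a0| by lra.
  have h3e := ler_wpM2r e0 h3; rewrite mul1r in h3e.
  case h: (fl X n x \in s).
    have hv := level_bound h; rewrite -/v in hv; lra.
  have hv := hB x (negbT h); rewrite -/v in hv.
  have hk : fl X n x = k0.
    apply/eqP; apply: contraFT h => hk.
    by rewrite mem_sq HN1 //= hk /= (@fl_rng _ _ _ X n M x hx).
  have hc := @L_close _ _ _ X n x0 x (esym hk); rewrite -/e -/a0 in hc.
  have := ler_distD a0 v (X x); rewrite (distrC a0 (X x)) => hd.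
  lra.
Qed.

End Step.
Unset Implicit Arguments.
Lemma w_ge_n (R : realType) n : n%:R <= w R n.
Proof. by rewrite /w -natrX ler_nat ltnW // ltn_expl. Qed.

Theorem proposition3p4 (d : measure_display) (T : measurableType d)
  (R : realType) (P : probability T R) (Phi : R -> R) (X : T -> R) :
  nonatomic P -> orlicz_function Phi -> in_LPhi P Phi X ->
  exists q : nat -> fin_family,
    (forall n, in_Pi P (q n)) /\
    {ae P, forall x, cond_exp_part P (q n) X x @[n --> \oo] --> X x} /\
    exists Z : T -> R, in_LPhi P Phi Z /\
      {ae P, forall x, forall n, `|cond_exp_part P (q n) X x| <= Z x}.
Proof.
move=> _ oPhi LX.
have [mX _] := LX.
have iX := LPhi_int oPhi LX.
pose nullL n k := if (P (L X n k) == 0)%E then L X n k else set0.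
have hneg : P.-negligible (\bigcup_n \bigcup_m (nullL n (Posz m) `|` nullL n (Negz m))).
  apply: negligible_bigcup => n; apply: negligible_bigcup => m.
  have nL : forall k, P.-negligible (nullL n k).
    move=> k; rewrite /nullL; case: ifP => [/eqP h|_]; last exact: negligible_set0.
    by exists (L X n k); split => //; exact: mL.
  exact: negligibleU.
have [N1 [mN1 PN1 subN1]] := hneg.
have HN1 : forall n y, ~ N1 y -> (0 < P (L X n (fl X n y)))%E.
  move=> n y nNy; rewrite lt0e measure_ge0 andbT; apply/negP => /eqP h0.
  apply: nNy; apply: subN1; exists n => //; case E: (fl X n y) => [m|m];
    exists m => //; [left|right]; rewrite /nullL -E h0 eqxx //.
have [x0 x0N] : exists x0, ~ N1 x0.
  apply: contrapT => /forallNP H.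
  have sub : setT `<=` N1 by move=> y _; apply: contrapT; apply: H.
  have := le_measure P (mem_set measurableT) (mem_set mN1) sub.
  move=> h; have : (1 <= 0 :> \bar R)%E; last by rewrite lee_fin ler10.
  by rewrite -[X in (_ <= X)%E]PN1 -(probability_setT P); exact: h.
have HM : forall n, exists M : nat, [/\ (0 < M)%N, (n <= M)%N &
   (\int[P]_(y in [set y | (M%:R <= `|X y|)%R]) (`|X y|)%:E
     <= ((w R n)^-1 * fine (P (L X n (fl X n x0))))%:E)%E].
  move=> n.
  have ep : 0 < (w R n)^-1 * fine (P (L X n (fl X n x0))).
    by rewrite mulr_gt0 ?invr_gt0 ?w_gt0 // fineP_gt0 //; [exact: mL|exact: HN1].
  have [m0 Hm0] := tail_small mX iX ep.
  exists (maxn (maxn m0 n) 1); split.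
  - by rewrite leq_max orbT.
  - by rewrite !leq_max leqnn orbT.
  - by apply: Hm0; rewrite !leq_max leqnn.
have [Mf HMf] := choice HM.
pose q n := qq P X (fl X n x0) (Mf n) n.
have st : forall n, _ := fun n =>
  let: And3 M1 Mn Mt := HMf n in
  @step _ _ _ P X mX iX n (Mf n) x0 N1 mN1 PN1 (HN1 n) x0N M1 Mt.
exists q; split; [|split].
- by move=> n; have [] := st n.
- exists N1; split => // x /=; apply: contra_notP => nNx.
  apply/cvgrPdist_le => eps eps0.
  have := nbhs_infty_gtr (`|X x|); have := nbhs_infty_gtr ((3 + `|X x0|) / eps).
  apply: filterS2 => m h2 h1.
  have [_ _ hc] := st m.
  have [_ Mm _] := HMf m.
  rewrite distrC; apply: le_trans (hc x nNx _) _.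
    by apply: lt_le_trans h1 _; rewrite ler_nat.
  rewrite ler_pdivrMr ?w_gt0 //.
  move: h2; rewrite ltr_pdivrMr // => h2.
  apply: ltW; apply: (lt_le_trans h2); rewrite mulrC.
  by apply: ler_wpM2l; [exact: ltW|exact: w_ge_n].
- exists (fun x => `|X x| + (2 * `|X x0| + 3)); split.
    by apply: LPhi_Z => //; rewrite addr_ge0 // mulr_ge0.
  by apply: aeW => x n; have [_ hd _] := st n; exact: hd.
Qed.
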